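(* $\mathcal{G}\subseteq\mathcal{F}$; that is, every function in $\mathcal{G}$ is strictly definable in the simply typed $\lambda$-calculus with $\beta\eta$-conversion.
   Context: We work in the simply typed $\lambda$-calculus (type assignment to untyped $\lambda$-terms) with a single base type $o$. For a type $\tau$, $\omega_\tau=(\tau\to\tau)\to\tau\to\tau$. The Church numeral of $n$ is $\rho(n)=\lambda f x.f^{n}x$. A function $f:\mathbb{N}^k\to\mathbb{N}$ is strictly definable if there exist a type $\tau$ and a term $E$ with $\vdash E:\omega_\tau\to\cdots\to\omega_\tau\to\omega_\tau$ ($k$ arguments) such that $E\,\rho(n_1)\cdots\rho(n_k)=_{\beta\eta}\rho(f(n_1,\dots,n_k))$ for all $n_1,\dots,n_k\in\mathbb{N}$. $\mathcal{F}$ denotes the class of all strictly definable functions. Extended polynomials: the smallest class of functions over $\mathbb{N}$ containing the constants $0$ and $1$, projections, addition, multiplication and $\mathrm{ifzero}(n,m,p)=(\text{if } n=0 \text{ then } m \text{ else } p)$, closed under composition. $\mathcal{G}$ is the smallest class of functions over $\mathbb{N}$ that is closed under composition and contains: all extended polynomials; for every $l\geq 2$ the function $f_1^{l}(m,n_1,\dots,n_l)=n_i$ where $i=(m\bmod l)+1$; and for every $l\geq 1$ the function $f_2^{l}(m,n_1,n_2)=(\text{if } m\leq l \text{ then } n_1 \text{ else } n_2)$. *)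

(* Defs.v *)
From Stdlib Require Import Relation_Operators.
From mathcomp Require Import all_boot.

Set Implicit Arguments.
Unset Strict Implicit.
Unset Printing Implicit Defensive.

Inductive ty : Type := TO | Arr of ty & ty.

Definition omega (t : ty) : ty := Arr (Arr t t) (Arr t t).

Definition arrows (k : nat) (A B : ty) : ty := iter k (Arr A) B.

Inductive tm : Type := Var of nat | App of tm & tm | Lam of tm.

Fixpoint lift (c : nat) (t : tm) : tm :=
  match t with
  | Var n => if c <= n then Var n.+1 else Var n
  | App a b => App (lift c a) (lift c b)
  | Lam a => Lam (lift c.+1 a)
  end.

Fixpoint subst (j : nat) (s : tm) (t : tm) : tm :=
  match t with
  | Var n => if n == j then s else if j < n then Var n.-1 else Var n
  | App a b => App (subst j s a) (subst j s b)
  | Lam a => Lam (subst j.+1 (lift 0 s) a)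
  end.

Inductive step : tm -> tm -> Prop :=
  | step_beta t s : step (App (Lam t) s) (subst 0 s t)
  | step_eta t : step (Lam (App (lift 0 t) (Var 0))) t
  | step_appl a a' b : step a a' -> step (App a b) (App a' b)
  | step_appr a b b' : step b b' -> step (App a b) (App a b')
  | step_lam a a' : step a a' -> step (Lam a) (Lam a').

Definition beta_eta_eq : tm -> tm -> Prop := clos_refl_sym_trans tm step.

Fixpoint lookup (G : seq ty) (n : nat) : option ty :=
  match G, n with
  | [::], _ => None
  | A :: _, 0 => Some A
  | _ :: G', m.+1 => lookup G' m
  end.

Inductive typed : seq ty -> tm -> ty -> Prop :=
  | typed_var G n A : lookup G n = Some A -> typed G (Var n) A
  | typed_app G a b A B : typed G a (Arr A B) -> typed G b A -> typed G (App a b) B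
  | typed_lam G a A B : typed (A :: G) a B -> typed G (Lam a) (Arr A B).

Definition church (n : nat) : tm := Lam (Lam (iter n (App (Var 1)) (Var 0))).

Definition apps (E : tm) (ts : seq tm) : tm := foldl App E ts.

Definition strictly_definable (k : nat) (f : ('I_k -> nat) -> nat) : Prop :=
  exists (tau : ty) (E : tm),
    typed [::] E (arrows k (omega tau) (omega tau)) /\
    forall x : 'I_k -> nat,
      beta_eta_eq (apps E [seq church (x i) | i <- enum 'I_k]) (church (f x)).

Definition compose (m k : nat) (h : ('I_m -> nat) -> nat)
  (gs : 'I_m -> ('I_k -> nat) -> nat) : ('I_k -> nat) -> nat :=
  fun x => h (fun i => gs i x).

Inductive ext_poly : forall k : nat, (('I_k -> nat) -> nat) -> Prop :=
  | ep_zero k : ext_poly (fun _ : 'I_k -> nat => 0)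
  | ep_one k : ext_poly (fun _ : 'I_k -> nat => 1)
  | ep_proj k (i : 'I_k) : ext_poly (fun x : 'I_k -> nat => x i)
  | ep_add : ext_poly (fun x : 'I_2 -> nat => x (inord 0) + x (inord 1))
  | ep_mul : ext_poly (fun x : 'I_2 -> nat => x (inord 0) * x (inord 1))
  | ep_ifzero : ext_poly (fun x : 'I_3 -> nat =>
                   if x (inord 0) == 0 then x (inord 1) else x (inord 2))
  | ep_comp m k (h : ('I_m -> nat) -> nat) (gs : 'I_m -> ('I_k -> nat) -> nat) :
      ext_poly h -> (forall i, ext_poly (gs i)) -> ext_poly (compose h gs).

(* f_1^l (m, n_1, ..., n_l) = n_i with i = (m mod l) + 1; argument 0 is m *)
Definition f1 (l : nat) : ('I_l.+1 -> nat) -> nat :=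
  fun x => x (inord ((x (inord 0)) %% l).+1).

Arguments f1 l x : clear implicits.

Definition f2 (l : nat) : ('I_3 -> nat) -> nat :=
  fun x => if x (inord 0) <= l then x (inord 1) else x (inord 2).

Arguments f2 l x : clear implicits.

Inductive inG : forall k : nat, (('I_k -> nat) -> nat) -> Prop :=
  | G_ext_poly k (f : ('I_k -> nat) -> nat) : ext_poly f -> inG f
  | G_f1 l : 2 <= l -> inG (f1 l)
  | G_f2 l : 1 <= l -> inG (f2 l)
  | G_comp m k (h : ('I_m -> nat) -> nat) (gs : 'I_m -> ('I_k -> nat) -> nat) :
      inG h -> (forall i, inG (gs i)) -> inG (compose h gs).

(* Main.v *)
Require Import Defs.
From mathcomp Require Import all_boot.
From Stdlib Require Import Relation_Operators List.
From mathcomp Require Import all_boot zify.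
Require Import Defs.
Set Implicit Arguments. Unset Strict Implicit. Unset Printing Implicit Defensive.

Definition upr (xi : nat -> nat) : nat -> nat := fun i => if i is j.+1 then (xi j).+1 else 0.
Fixpoint ren (xi : nat -> nat) (t : tm) : tm :=
  match t with Var n => Var (xi n) | App a b => App (ren xi a) (ren xi b)
  | Lam a => Lam (ren (upr xi) a) end.
Definition up (s : nat -> tm) : nat -> tm := fun i => if i is j.+1 then ren succn (s j) else Var 0.
Fixpoint inst (s : nat -> tm) t : tm :=
  match t with Var n => s n | App a b => App (inst s a) (inst s b)
  | Lam a => Lam (inst (up s) a) end.

Lemma ren_ext xi zeta t : (forall i, xi i = zeta i) -> ren xi t = ren zeta t.
Proof.
elim: t xi zeta => [n|a IHa b IHb|a IHa] xi zeta E /=; first by rewrite E.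
  by rewrite (IHa _ _ E) (IHb _ _ E).
by rewrite (IHa _ (upr zeta)) // => -[|i] //=; rewrite E.
Qed.

Lemma inst_ext s s' t : (forall i, s i = s' i) -> inst s t = inst s' t.
Proof.
elim: t s s' => [n|a IHa b IHb|a IHa] s s' E /=; first by rewrite E.
  by rewrite (IHa _ _ E) (IHb _ _ E).
by rewrite (IHa _ (up s')) // => -[|i] //=; rewrite E.
Qed.

Lemma ren_ren xi zeta t : ren xi (ren zeta t) = ren (xi \o zeta) t.
Proof.
elim: t xi zeta => [n|a IHa b IHb|a IHa] xi zeta //=; first by rewrite IHa IHb.
by rewrite IHa; congr Lam; apply: ren_ext => -[|i].
Qed.

Lemma inst_ren s xi t : inst s (ren xi t) = inst (s \o xi) t.
Proof.
elim: t s xi => [n|a IHa b IHb|a IHa] s xi //=; first by rewrite IHa IHb.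
by rewrite IHa; congr Lam; apply: inst_ext => -[|i].
Qed.

Lemma ren_inst xi s t : ren xi (inst s t) = inst (ren xi \o s) t.
Proof.
elim: t xi s => [n|a IHa b IHb|a IHa] xi s //=; first by rewrite IHa IHb.
rewrite IHa; congr Lam; apply: inst_ext => -[|i] //=.
by rewrite !ren_ren; apply: ren_ext.
Qed.

Lemma inst_inst s s' t : inst s (inst s' t) = inst (inst s \o s') t.
Proof.
elim: t s s' => [n|a IHa b IHb|a IHa] s s' //=; first by rewrite IHa IHb.
rewrite IHa; congr Lam; apply: inst_ext => -[|i] //=.
by rewrite inst_ren ren_inst; apply: inst_ext.
Qed.

Lemma inst_id s t : (forall i, s i = Var i) -> inst s t = t.
Proof.
elim: t s => [n|a IHa b IHb|a IHa] s E /=; first by rewrite E.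
  by rewrite IHa // IHb.
by rewrite IHa // => -[|i] //=; rewrite E.
Qed.

Lemma ren_as_inst xi t : ren xi t = inst (fun i => Var (xi i)) t.
Proof.
elim: t xi => [n|a IHa b IHb|a IHa] xi //=; first by rewrite IHa IHb.
by rewrite IHa; congr Lam; apply: inst_ext => -[|i].
Qed.

Lemma ren_id xi t : (forall i, xi i = i) -> ren xi t = t.
Proof. by move=> E; rewrite ren_as_inst; apply: inst_id => i; rewrite E. Qed.

Definition liftv c i := if c <= i then i.+1 else i.
Lemma lift_ren c t : lift c t = ren (liftv c) t.
Proof.
elim: t c => [n|a IHa b IHb|a IHa] c /=; first by rewrite /liftv; case: ifP.
  by rewrite IHa IHb.
by rewrite IHa; congr Lam; apply: ren_ext => -[|i] //=; rewrite /liftv ltnS; case: ifP.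
Qed.

Lemma lift0 t : lift 0 t = ren succn t.
Proof. by rewrite lift_ren; apply: ren_ext. Qed.

Definition substv j s i := if i == j then s else if j < i then Var i.-1 else Var i.
Lemma subst_inst j s t : subst j s t = inst (substv j s) t.
Proof.
elim: t j s => [n|a IHa b IHb|a IHa] j s //=; first by rewrite IHa IHb.
rewrite IHa; congr Lam; apply: inst_ext => -[|i] //=.
rewrite /substv eqSS ltnS; case: eqP => _; first by rewrite lift0.
by case: ifP => // /=; case: i.
Qed.

Definition scons (u : tm) (s : nat -> tm) i := if i is j.+1 then s j else u.
Lemma subst0 u t : subst 0 u t = inst (scons u Var) t.
Proof. by rewrite subst_inst; apply: inst_ext => -[|i]. Qed.

Fixpoint wf n t := match t with Var i => i < n | App a b => wf n a && wf n b | Lam a => wf n.+1 a end.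

Lemma inst_wf n s t : wf n t -> (forall i, i < n -> s i = Var i) -> inst s t = t.
Proof.
elim: t n s => [m|a IHa b IHb|a IHa] n s /=; first by move=> H E; rewrite E.
  by case/andP=> Ha Hb E; rewrite (IHa n) // (IHb n).
move=> H E; rewrite (IHa n.+1) // => -[|i] //=; rewrite ltnS => Hi; by rewrite E.
Qed.

Lemma inst_closed s t : wf 0 t -> inst s t = t.
Proof. by move=> H; apply: (inst_wf H). Qed.
Lemma ren_closed xi t : wf 0 t -> ren xi t = t.
Proof. by move=> H; rewrite ren_as_inst inst_closed. Qed.

Lemma wf_mono n m t : wf n t -> n <= m -> wf m t.
Proof.
elim: t n m => [i|a IHa b IHb|a IHa] n m /=.
- by move=> H1 H2; apply: leq_trans H2.
- by case/andP=> Ha Hb H; rewrite (IHa n) // (IHb n).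
- by move=> H1 H2; apply: (IHa n.+1).
Qed.

Lemma lookup_size G n A : lookup G n = Some A -> n < size G.
Proof. by elim: G n => [|B G IH] [|n] //= /IH. Qed.

Lemma typed_wf G t A : typed G t A -> wf (size G) t.
Proof.
elim=> {G t A} /=.
- by move=> G n A /lookup_size.
- by move=> G a b A B _ -> _ ->.
- by [].
Qed.

Definition red := clos_refl_trans tm step.
Definition Lams n t := iter n Lam t.

Lemma red_trans a b c : red a b -> red b c -> red a c.
Proof. exact: rt_trans. Qed.
Lemma red_refl a : red a a.
Proof. exact: rt_refl. Qed.
Lemma red_step a b : step a b -> red a b.
Proof. exact: rt_step. Qed.

Lemma red_app a a' b b' : red a a' -> red b b' -> red (App a b) (App a' b').
Proof.
move=> H1 H2; apply: (@red_trans _ (App a' b)).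
  elim: H1 => [x y H|x|x y z _ K1 _ K2]; [exact/red_step/step_appl|exact: red_refl|exact: red_trans K1 K2].
elim: H2 => [x y H|x|x y z _ K1 _ K2]; [exact/red_step/step_appr|exact: red_refl|exact: red_trans K1 K2].
Qed.

Lemma red_lam a a' : red a a' -> red (Lam a) (Lam a').
Proof.
elim => [x y H|x|x y z _ K1 _ K2]; [exact/red_step/step_lam|exact: red_refl|exact: red_trans K1 K2].
Qed.

Lemma red_Lams n a a' : red a a' -> red (Lams n a) (Lams n a').
Proof. by elim: n => //= n IH H; apply/red_lam/IH. Qed.

Lemma red_apps a a' ts : red a a' -> red (apps a ts) (apps a' ts).
Proof. elim: ts a a' => //= u ts IH a a' H; apply: IH; exact: red_app H (red_refl _). Qed.

Lemma red_conv a b : red a b -> beta_eta_eq a b.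
Proof.
elim => [x y H|x|x y z _ H1 _ H2]; [exact: rst_step|exact: rst_refl|exact: rst_trans H1 H2].
Qed.

Lemma conv_app a a' b b' : beta_eta_eq a a' -> beta_eta_eq b b' -> beta_eta_eq (App a b) (App a' b').
Proof.
move=> H1 H2; apply: (@rst_trans _ _ _ (App a' b)).
  elim: H1 => [x y H|x|x y _ H|x y z _ K1 _ K2].
  - exact/rst_step/step_appl. - exact: rst_refl. - exact: rst_sym H. - exact: rst_trans K1 K2.
elim: H2 => [x y H|x|x y _ H|x y z _ K1 _ K2].
- exact/rst_step/step_appr. - exact: rst_refl. - exact: rst_sym H. - exact: rst_trans K1 K2.
Qed.

Lemma conv_apps_map (I : Type) a a' (s : seq I) F F' :
  beta_eta_eq a a' -> (forall i, beta_eta_eq (F i) (F' i)) ->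
  beta_eta_eq (apps a [seq F i | i <- s]) (apps a' [seq F' i | i <- s]).
Proof.
elim: s a a' => //= i s IH a a' H E; apply: IH => //; exact: conv_app.
Qed.

Lemma beta t u : red (App (Lam t) u) (inst (scons u Var) t).
Proof. rewrite -subst0; exact/red_step/step_beta. Qed.

Definition upn n s := iter n up s.

Lemma inst_Lams s n t : inst s (Lams n t) = Lams n (inst (upn n s) t).
Proof. elim: n s => //= n IH s; rewrite IH /upn; congr (Lam (Lams n (inst _ t))); by rewrite -iterSr. Qed.

Lemma upn_lt n s i : i < n -> upn n s i = Var i.
Proof.
elim: n i => // n IH [|i] //= H; rewrite /upn /= -/(upn n s) IH //.
Qed.

Lemma upn_ge n s i : upn n s (n + i) = ren (addn n) (s i).
Proof.
elim: n => /= [|n IH]; first by rewrite ren_id.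
rewrite /upn /= -/(upn n s) IH ren_ren; by apply: ren_ext.
Qed.

Lemma inst_apps s a ts : inst s (apps a ts) = apps (inst s a) (map (inst s) ts).
Proof. by elim: ts a => //= u ts IH a; rewrite IH. Qed.

Lemma ren_apps s a ts : ren s (apps a ts) = apps (ren s a) (map (ren s) ts).
Proof. by elim: ts a => //= u ts IH a; rewrite IH. Qed.

Lemma inst_iter s n a b : inst s (iter n (App a) b) = iter n (App (inst s a)) (inst s b).
Proof. by elim: n => //= n ->. Qed.
Lemma ren_iter s n a b : ren s (iter n (App a) b) = iter n (App (ren s a)) (ren s b).
Proof. by elim: n => //= n ->. Qed.

Definition msub (vs : seq tm) (i : nat) : tm :=
  if i < size vs then nth (Var 0) vs (size vs - 1 - i) else Var (i - size vs).

Lemma multi_beta vs t : red (apps (Lams (size vs) t) vs) (inst (msub vs) t).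
Proof.
elim: vs t => [|v vs IH] t /=.
  rewrite inst_id; first exact: red_refl.
  by move=> i; rewrite /msub /= subn0.
apply: red_trans (red_apps _ (beta _ _)) _.
rewrite inst_Lams; apply: red_trans (IH _) _.
rewrite inst_inst; have -> : inst (inst (msub vs) \o upn (size vs) (scons v Var)) t = inst (msub (v :: vs)) t.
  apply: inst_ext => i /=.
  case: (ltnP i (size vs)) => Hi.
    rewrite upn_lt //= /msub /= Hi ltnS ltnW //.
    have -> : (size vs).+1 - 1 - i = (size vs - 1 - i).+1 by lia.
    by [].
  have [j ->] : exists j, i = size vs + j by exists (i - size vs); lia.
  rewrite upn_ge inst_ren inst_id.
    rewrite /msub /=; case: j => [|j] /=; first by rewrite addn0 ltnSn (_ : (size vs).+1 - 1 - size vs = 0) //; lia.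
    rewrite ltnNge (_ : size vs < size vs + j.+1) /=; last by lia.
    by congr Var; lia.
  by move=> k /=; rewrite /msub ltnNge leq_addr /=; congr Var; lia.
exact: red_refl.
Qed.

Lemma wf_iter n k a b : wf k a -> wf k b -> wf k (iter n (App a) b).
Proof. by move=> Ha Hb; elim: n => //= n ->; rewrite Ha. Qed.

Lemma church_closed n : wf 0 (church n).
Proof. by rewrite /church /=; apply: wf_iter. Qed.

Lemma church_app n f x : red (apps (church n) [:: f; x]) (iter n (App f) x).
Proof.
rewrite /=; apply: red_trans (red_app (beta _ _) (red_refl _)) _.
rewrite /= inst_iter /=.
apply: red_trans (beta _ _) _.
rewrite inst_iter /= inst_ren inst_id //; exact: red_refl.
Qed.

Fixpoint vars k := if k is k'.+1 then Var k' :: vars k' else [::].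

Lemma size_vars k : size (vars k) = k.
Proof. by elim: k => //= k ->. Qed.

Lemma nth_vars k j : j < k -> nth (Var 0) (vars k) j = Var (k - 1 - j).
Proof.
elim: k j => // k IH [|j] /= H; first by rewrite subn1 subn0.
rewrite IH //; congr Var; lia.
Qed.

Lemma vars_rcons k : vars k.+1 = rcons (map (ren succn) (vars k)) (Var 0).
Proof. by elim: k => //= k ->. Qed.

Lemma map_msub_vars vs : map (inst (msub vs)) (vars (size vs)) = vs.
Proof.
apply: (@eq_from_nth _ (Var 0)); first by rewrite size_map size_vars.
move=> j; rewrite size_map size_vars => Hj.
rewrite (nth_map (Var 0)) ?size_vars // nth_vars //= /msub.
rewrite ifT; last by lia.
by rewrite (_ : size vs - 1 - (size vs - 1 - j) = j) //; lia.


Qed.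

Lemma eta_Lams k t : red (Lams k (apps (ren (addn k) t) (vars k))) t.
Proof.
elim: k t => [|k IH] t.
  by rewrite /= ren_id //; exact: red_refl.
rewrite /Lams iterSr -/(Lams k _) vars_rcons /apps foldl_rcons -/(apps _ _).
have -> : apps (ren (addn k.+1) t) (map (ren succn) (vars k)) = lift 0 (apps (ren (addn k) t) (vars k)).
  by rewrite lift0 ren_apps ren_ren; congr apps; apply: ren_ext.
apply: red_trans (red_Lams _ (red_step (step_eta _))) _.
exact: IH.
Qed.

Lemma Lams_add n m t : Lams (n + m) t = Lams n (Lams m t).
Proof. by rewrite /Lams iterD. Qed.

Lemma lookup_cat G G' n : n < size G -> lookup (G ++ G') n = lookup G n.
Proof. by elim: G n => [|B G IH] [|n] //= H; apply: IH. Qed.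

Lemma lookup_cat_ge G G' n : lookup (G ++ G') (size G + n) = lookup G' n.
Proof. by elim: G => //= B G IH. Qed.

Lemma lookup_nseq A n G i : i < n -> lookup (nseq n A ++ G) i = Some A.
Proof. by elim: n i => // n IH [|i] //= H; apply: IH. Qed.

Lemma lookup_nseq_ge A n G i : lookup (nseq n A ++ G) (n + i) = lookup G i.
Proof. by elim: n => //= n IH. Qed.

Lemma weaken G G' t A : typed G t A -> typed (G ++ G') t A.
Proof.
elim=> {G t A}.
- move=> G n A H; apply: typed_var; rewrite lookup_cat //; exact: lookup_size H.
- move=> G a b A B _ H1 _ H2; exact: typed_app H1 H2.
- move=> G a A B _ H; exact: typed_lam.
Qed.

Lemma closed_typed G t A : typed [::] t A -> typed G t A.
Proof. by move/(weaken G). Qed.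

Lemma typed_Lams n A B G t : typed (nseq n A ++ G) t B -> typed G (Lams n t) (arrows n A B).
Proof.
elim: n G => //= n IH G H; apply: typed_lam; apply: IH.
rewrite (_ : nseq n A ++ A :: G = A :: nseq n A ++ G) //; by clear; elim: n => //= n ->.
Qed.

Lemma typed_apps G t n A B ts : typed G t (arrows n A B) -> size ts = n ->
  (forall u, List.In u ts -> typed G u A) -> typed G (apps t ts) B.
Proof.
elim: ts t n => [|u ts IH] t [|n] //= Ht [Hs] Hu.
apply: (IH _ n) => //; last by move=> w Hw; apply: Hu; right.
apply: typed_app Ht _; apply: Hu; by left.
Qed.

Lemma typed_church G tau n : typed G (church n) (omega tau).
Proof.
do 2 apply: typed_lam; elim: n => /= [|n IH]; first by apply: typed_var.
by apply: typed_app IH; apply: typed_var.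
Qed.

Lemma In_map_inv (T U : Type) (f : T -> U) (s : seq T) u : List.In u (map f s) -> exists x, u = f x /\ List.In x s.
Proof. by move/in_map_iff => [x [<- H]]; exists x. Qed.

Arguments msub : simpl never.
Arguments upn : simpl never.
Arguments church : simpl never.

Definition args k (x : 'I_k -> nat) := [seq church (x i) | i <- enum 'I_k].

Definition def_at (tau : ty) k (f : ('I_k -> nat) -> nat) :=
  exists E, typed [::] E (arrows k (omega tau) (omega tau)) /\
    forall x, beta_eta_eq (apps E (args x)) (church (f x)).

Lemma def_at_ext tau k (f g : ('I_k -> nat) -> nat) : (forall x, f x = g x) -> def_at tau f -> def_at tau g.
Proof. by move=> E [T [HT HE]]; exists T; split => // x; rewrite -E. Qed.

Lemma size_args k x : size (@args k x) = k.
Proof. by rewrite size_map size_enum_ord. Qed.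

Lemma nth_args k x (i : 'I_k) : nth (Var 0) (@args k x) i = church (x i).
Proof. by rewrite (nth_map i) ?size_enum_ord // nth_ord_enum. Qed.

Lemma args_closed k x u : List.In u (@args k x) -> wf 0 u.
Proof. by case/(@In_map_inv _ _ _ _ u) => i [-> _]; apply: church_closed. Qed.

Lemma msub_args k x (i : 'I_k) : msub (@args k x) (k - 1 - i) = church (x i).
Proof.
rewrite /msub size_args ifT; last by move: (ltn_ord i); lia.
rewrite (_ : k - 1 - (k - 1 - i) = i) ?nth_args //; move: (ltn_ord i); lia.
Qed.

Lemma msub_argsS k x j : j <= k -> msub (@args k.+1 x) j = church (x (inord (k - j))).
Proof.
move=> H; rewrite -msub_args inordK; last by lia.
congr msub; lia.
Qed.

Lemma In_nth' (s : seq tm) i : i < size s -> List.In (nth (Var 0) s i) s.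
Proof. elim: s i => // u s IH [|i] /= H; [by left | right; exact: IH]. Qed.

Lemma msub_closed vs i : (forall u, List.In u vs -> wf 0 u) -> i < size vs -> wf 0 (msub vs i).
Proof.
move=> H Hi; rewrite /msub Hi; apply: H; apply: In_nth'; lia.
Qed.

Lemma inst_ext_wf n s s' t : wf n t -> (forall i, i < n -> s i = s' i) -> inst s t = inst s' t.
Proof.
elim: t n s s' => [m|a IHa b IHb|a IHa] n s s' /=; first by move=> H E; rewrite E.
  by case/andP=> Ha Hb E; rewrite (IHa n _ s') // (IHb n _ s').
move=> H E; rewrite (IHa n.+1 _ (up s')) // => -[|i] //=; rewrite ltnS => Hi; by rewrite E.
Qed.

Lemma mb2 vs p t : (forall u, List.In u vs -> wf 0 u) -> wf (p + size vs) t ->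
  red (apps (Lams (size vs) (Lams p t)) vs)
      (Lams p (inst (fun i => if i < p then Var i else msub vs (i - p)) t)).
Proof.
move=> Hc Hw; apply: red_trans (multi_beta _ _) _; rewrite inst_Lams.
rewrite (inst_ext_wf (s' := fun i => if i < p then Var i else msub vs (i - p)) Hw); first exact: red_refl.
move=> i Hi'; case: ifP => Hi; first by rewrite upn_lt.
have -> : i = p + (i - p) by lia.
rewrite upn_ge ren_closed ?msub_closed //; [by rewrite (_ : p + (i - p) - p = i - p) //; lia | lia].
Qed.

Lemma mb2' n vs p t : size vs = n -> (forall u, List.In u vs -> wf 0 u) -> wf (p + n) t ->
  red (apps (Lams n (Lams p t)) vs)
      (Lams p (inst (fun i => if i < p then Var i else msub vs (i - p)) t)).
Proof. by move=> <-; apply: mb2. Qed.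

Lemma const_def tau k c : def_at tau (fun _ : 'I_k -> nat => c).
Proof.
exists (Lams k (church c)); split.
  by apply: typed_Lams; apply: typed_church.
move=> x; apply: red_conv; rewrite -{1}(size_args x).
apply: red_trans (multi_beta _ _) _; rewrite inst_closed ?church_closed //; exact: red_refl.
Qed.

Lemma proj_def tau k (i : 'I_k) : def_at tau (fun x : 'I_k -> nat => x i).
Proof.
exists (Lams k (Var (k - 1 - i))); split.
  apply: typed_Lams; apply: typed_var; rewrite lookup_nseq //; move: (ltn_ord i); lia.
move=> x; apply: red_conv; rewrite -{1}(size_args x).
apply: red_trans (multi_beta _ _) _; rewrite /= msub_args; exact: red_refl.
Qed.

Lemma add_def tau : def_at tau (fun x : 'I_2 -> nat => x (inord 0) + x (inord 1)).
Proof.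
exists (Lams 2 (Lams 2 (apps (Var 3) [:: Var 1; apps (Var 2) [:: Var 1; Var 0]]))); split.
  apply: typed_Lams; do 2 apply: typed_lam.
  by do 2 (apply: typed_app; last by repeat econstructor); repeat econstructor.
move=> x; apply: red_conv.
apply: red_trans (mb2' (size_args x) (@args_closed _ x) _) _ => //; rewrite /= !msub_argsS //=.
change (1 - (3 - 2)) with 0; change (1 - (2 - 2)) with 1.
apply: (@red_Lams 2).
apply: red_trans (red_app (red_refl _) (church_app _ _ _)) _.
apply: red_trans (church_app _ _ _) _.
rewrite /= -iterD; exact: red_refl.
Qed.

Lemma inst_app2 s c u v : wf 0 c -> inst s (App (App c u) v) = App (App c (inst s u)) (inst s v).
Proof. by move=> H; rewrite /= inst_closed. Qed.

Lemma iter_mul a b F f y : (forall z, red (App F z) (iter b (App f) z)) ->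
  red (iter a (App F) y) (iter (a * b) (App f) y).
Proof.
move=> H; elim: a => /= [|a IH]; first exact: red_refl.
apply: red_trans (red_app (red_refl _) IH) _.
by rewrite mulSn iterD; apply: H.
Qed.

Lemma mul_def tau : def_at tau (fun x : 'I_2 -> nat => x (inord 0) * x (inord 1)).
Proof.
exists (Lams 2 (Lams 2 (apps (Var 3) [:: App (Var 2) (Var 1); Var 0]))); split.
  apply: typed_Lams; do 2 apply: typed_lam.
  by do 2 (apply: typed_app; last by repeat econstructor); repeat econstructor.
move=> x; apply: red_conv.
apply: red_trans (mb2' (size_args x) (@args_closed _ x) _) _ => //; rewrite /= !msub_argsS //=.
change (1 - (3 - 2)) with 0; change (1 - (2 - 2)) with 1.
apply: (@red_Lams 2).
apply: red_trans (church_app _ _ _) _.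
apply: iter_mul => z; exact: (church_app _ (Var 1) z).
Qed.

Lemma ifzero_def tau : def_at tau (fun x : 'I_3 -> nat =>
                   if x (inord 0) == 0 then x (inord 1) else x (inord 2)).
Proof.
exists (Lams 3 (Lams 2 (apps (Var 4) [:: Lam (apps (Var 3) [:: Var 2; Var 1]); apps (Var 3) [:: Var 1; Var 0]]))); split.
  apply: typed_Lams; do 2 apply: typed_lam.
  by do 2 (apply: typed_app; last by repeat econstructor); repeat econstructor.
move=> x; apply: red_conv.
apply: red_trans (mb2' (size_args x) (@args_closed _ x) _) _ => //; rewrite /= !msub_argsS //.
rewrite ren_closed ?church_closed //.
change (2 - (4 - 2)) with 0; change (2 - (3 - 2)) with 1; change (2 - (2 - 2)) with 2.
apply: (@red_Lams 2).
apply: red_trans (church_app _ _ _) _.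
case: (x (inord 0)) => [|a] /=; first exact: church_app.
apply: red_trans (beta _ _) _.
rewrite inst_app2 ?church_closed //; exact: church_app.
Qed.

Lemma multi_beta' n vs t : size vs = n -> red (apps (Lams n t) vs) (inst (msub vs) t).
Proof. by move=> <-; apply: multi_beta. Qed.

Lemma In_vars k u : List.In u (vars k) -> exists2 j, j < k & u = Var j.
Proof.
elim: k => //= k IH [<-|/IH [j Hj ->]]; first by exists k.
by exists j => //; apply: ltnW.
Qed.

Lemma typed_vars k A G u : List.In u (vars k) -> typed (nseq k A ++ G) u A.
Proof. by case/In_vars => j Hj ->; apply: typed_var; rewrite lookup_nseq. Qed.

Lemma comp_def tau m k (h : ('I_m -> nat) -> nat) (gs : 'I_m -> ('I_k -> nat) -> nat) :
  def_at tau h -> (forall i, def_at tau (gs i)) -> def_at tau (compose h gs).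
Proof.
move=> [H [HT HE]] Hg.
have [Gs HGs] := fin_all_exists (U := fun _ => tm) Hg.
exists (Lams k (apps H [seq apps (Gs i) (vars k) | i <- enum 'I_m])); split.
  apply: typed_Lams; apply: (typed_apps (n := m) (A := omega tau)).
  - exact: closed_typed.
  - by rewrite size_map size_enum_ord.
  move=> u /(@In_map_inv _ _ _ _ u) [i [-> _]].
  apply: (typed_apps (n := k) (A := omega tau)); last exact: typed_vars.
  - by apply: closed_typed; case: (HGs i).
  - by rewrite size_vars.
move=> x.
apply: rst_trans (red_conv (multi_beta' _ (size_args x))) _.
rewrite inst_apps (inst_closed _ (typed_wf HT)) -map_comp.
have E : forall i, (inst (msub (args x)) \o (fun i => apps (Gs i) (vars k))) i = apps (Gs i) (args x).
  move=> i /=; rewrite inst_apps (inst_closed _ (typed_wf (proj1 (HGs i)))).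
  by have := map_msub_vars (args x); rewrite size_args => ->.
rewrite (eq_map E).
apply: rst_trans (HE (fun i => gs i x)).
apply: conv_apps_map; first exact: rst_refl.
by move=> i; case: (HGs i).
Qed.

Lemma ext_poly_def k (f : ('I_k -> nat) -> nat) : ext_poly f -> forall tau, def_at tau f.
Proof.
elim=> {k f}.
- by move=> k tau; apply: const_def.
- by move=> k tau; apply: const_def.
- by move=> k i tau; apply: proj_def.
- exact: add_def.
- exact: mul_def.
- exact: ifzero_def.
- move=> m k h gs _ IHh _ IHg tau; apply: comp_def => //.
Qed.

Arguments msub : simpl never.
Arguments upn : simpl never.
Arguments church : simpl never.

Definition Aty L := arrows L TO TO.
Definition Tty L := Arr (Aty L) (Aty L).

Definition NEXT L (h : nat -> nat) := Lam (Lams L (apps (Var L) [seq Var (L.-1 - h j) | j <- iota 0 L])).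
Definition STEP L h := Lam (Lam (App (NEXT L h) (App (Var 1) (Var 0)))).
Definition ID := Lam (Var 0).
Definition PI0 L := Lams L (Var L.-1).
Definition ARGS L := [:: Var (L + 2); Var (L + 1); Var L] ++ vars L.
Definition CAND L r i := apps (Var (L + 3 + (r.-1 - i))) (ARGS L).
Definition BODY L r h (c : nat -> nat) :=
  apps (apps (Var (L + 3 + r)) [:: STEP L h; ID; PI0 L]) [seq CAND L r (c j) | j <- iota 0 L].
Definition SEL L r h c := Lams r.+1 (Lams (3 + L) (BODY L r h c)).

Arguments NEXT : simpl never.
Arguments STEP : simpl never.
Arguments PI0 : simpl never.

Lemma wf_apps n a ts : wf n (apps a ts) = wf n a && all (wf n) ts.
Proof. by elim: ts a => [|u ts IH] a /=; [rewrite andbT | rewrite IH /= andbA]. Qed.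

Lemma map_inst_wf n s ts : all (wf n) ts -> (forall i, i < n -> s i = Var i) -> map (inst s) ts = ts.
Proof. by elim: ts => //= u ts IH /andP [Hu Hts] E; rewrite IH // (inst_wf Hu). Qed.

Lemma wf_Lams n p t : wf n (Lams p t) = wf (p + n) t.
Proof. by elim: p n => //= p IH n; rewrite IH addnS. Qed.

Lemma all_wf_vars n k : k <= n -> all (wf n) (vars k).
Proof. by elim: k => //= k IH H; rewrite (leq_trans _ H) ?IH // ltnW. Qed.

Section S.
Variable L : nat.
Hypothesis L0 : 0 < L.
Variable h : nat -> nat.
Hypothesis hL : forall j, j < L -> h j < L.

Lemma wf_NEXT : wf 0 (NEXT L h).
Proof.
rewrite /NEXT /= wf_Lams wf_apps /= addn1 ltnSn /=.
rewrite all_map; apply/allP => j _ /=; lia.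
Qed.

Opaque NEXT.

Lemma wf_PI0 : wf 0 (PI0 L).
Proof. by rewrite /PI0 wf_Lams /=; lia. Qed.

Lemma wf_STEP : wf 0 (STEP L h).
Proof. by rewrite /STEP /= (wf_mono wf_NEXT). Qed.

Lemma STEP_red X Y : red (App (App (STEP L h) X) Y) (App (NEXT L h) (App X Y)).
Proof.
apply: red_trans (red_app (beta _ _) (red_refl _)) _.
rewrite /STEP /= (inst_closed _ wf_NEXT).
apply: red_trans (beta _ _) _.
rewrite /= (inst_closed _ wf_NEXT) inst_ren inst_id //; exact: red_refl.
Qed.

Lemma iterSTEP m P : red (App (iter m (App (STEP L h)) ID) P) (iter m (App (NEXT L h)) P).
Proof.
elim: m => /= [|m IH]; first exact: beta.
apply: red_trans (STEP_red _ _) _; exact: red_app (red_refl _) IH.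
Qed.

Lemma NEXT_red pi cands : wf 0 pi -> size cands = L ->
  red (apps (App (NEXT L h) pi) cands) (apps pi [seq nth (Var 0) cands (h j) | j <- iota 0 L]).
Proof.
move=> Hpi Hs.
apply: red_trans (red_apps _ (beta _ _)) _.
Transparent NEXT.
rewrite /NEXT inst_Lams inst_apps /=.
rewrite -{3}(addn0 L) upn_ge /= ren_closed // -map_comp.
rewrite (eq_map (g := fun j => Var (L.-1 - h j))); last first.
  by move=> j /=; rewrite upn_lt //; lia.
apply: red_trans (multi_beta' _ Hs) _.
rewrite inst_apps inst_closed // -map_comp.
rewrite (_ : map _ _ = [seq nth (Var 0) cands (h j) | j <- iota 0 L]); first exact: red_refl.
apply/eq_in_map => j; rewrite mem_iota add0n => /andP [_ Hj] /=.
rewrite /msub Hs ifT; last by lia.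
by rewrite (_ : L - 1 - (L.-1 - h j) = h j) //; move: (hL Hj); lia.
Qed.

Opaque NEXT.

Lemma iter_lt m : iter m h 0 < L.
Proof. by elim: m => //= m IH; apply: hL. Qed.

Lemma iterNEXT m cands : size cands = L ->
  red (apps (iter m (App (NEXT L h)) (PI0 L)) cands) (nth (Var 0) cands (iter m h 0)).
Proof.
elim: m cands => [|m IH] cands Hs /=.
  apply: red_trans (multi_beta' _ Hs) _.
  rewrite /= /msub Hs ifT; last by lia.
  by rewrite (_ : L - 1 - L.-1 = 0); [exact: red_refl | lia].
apply: red_trans (@NEXT_red _ cands _ Hs) _.
  by apply: wf_iter; [apply: wf_NEXT | apply: wf_PI0].
apply: red_trans (IH _ _) _; first by rewrite size_map size_iota.
rewrite (nth_map 0) ?size_iota ?iter_lt // nth_iota ?iter_lt //; exact: red_refl.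
Qed.

Variable r : nat.
Variable c : nat -> nat.
Hypothesis cr : forall j, j < L -> c j < r.

Opaque STEP PI0.

Lemma all_wf_ARGS : all (wf (L + 3)) (ARGS L).
Proof. by rewrite /ARGS /= all_wf_vars; [rewrite !andbT; apply/and3P; split; lia | lia]. Qed.

Lemma wf_BODY : wf (3 + L + r.+1) (BODY L r h c).
Proof.
rewrite /BODY wf_apps wf_apps /=.
rewrite !(wf_mono wf_STEP) // (wf_mono wf_PI0) // andbT.
apply/andP; split; first lia.
rewrite all_map; apply/allP => j _ /=.
rewrite /CAND wf_apps /=; apply/andP; split; first lia.
apply: sub_all (all_wf_ARGS) => u Hu; apply: (wf_mono Hu); lia.
Qed.

Definition CAND' n := apps (church n) (ARGS L).

Lemma CAND'_red n : red (CAND' n) (apps (ren (addn L.+1) (iter n (App (Var 1)) (Var 0))) (vars L.+1)).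
Proof.
rewrite /CAND'; change (ARGS L) with ([:: Var (L+2); Var (L+1)] ++ vars L.+1).
rewrite /apps foldl_cat -!/(apps _ _).
apply: red_trans (red_apps _ (church_app _ _ _)) _.
rewrite ren_iter /= (_ : L.+1 + 1 = L + 2) ?addn0 ?addn1 //; [exact: red_refl | lia].
Qed.

Lemma sel_red (x : 'I_r.+1 -> nat) :
  red (apps (SEL L r h c) (args x)) (church (x (inord (c (iter (x (inord 0)) h 0)).+1))).
Proof.
apply: red_trans (mb2' (size_args x) (@args_closed _ x) wf_BODY) _.
set s' := (X in inst X _).
have E1 : inst s' (Var (L + 3 + r)) = church (x (inord 0)).
  rewrite /= /s' ifF; last by lia.
  by rewrite msub_argsS (_ : L + 3 + r - (3 + L) = r) ?subnn //; lia.
have E2 : map (inst s') [:: STEP L h; ID; PI0 L] = [:: STEP L h; ID; PI0 L].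
  by rewrite /= !inst_closed ?wf_STEP ?wf_PI0.
have E3 : map (inst s') [seq CAND L r (c j) | j <- iota 0 L] =
          [seq CAND' (x (inord (c j).+1)) | j <- iota 0 L].
  rewrite -map_comp; apply/eq_in_map => j; rewrite mem_iota add0n => /andP [_ Hj] /=.
  rewrite /CAND /CAND' inst_apps; congr apps.
    rewrite /= /s' ifF; last by lia.
    rewrite msub_argsS; last by lia.
    by congr (church (x (inord _))); move: (cr Hj); lia.
  apply: (map_inst_wf all_wf_ARGS) => i Hi; rewrite /s' ifT //; lia.
rewrite /BODY !inst_apps E1 E2 E3.
set m := x (inord 0).
set cands := [seq CAND' _ | j <- iota 0 L].
have H1 : red (apps (church m) [:: STEP L h; ID; PI0 L]) (iter m (App (NEXT L h)) (PI0 L)).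
  apply: red_trans (red_app (church_app _ _ _) (red_refl _)) _; exact: iterSTEP.
apply: red_trans (red_Lams _ (red_apps _ H1)) _.
apply: red_trans (red_Lams _ (iterNEXT _ _)) _; first by rewrite size_map size_iota.
rewrite /cands (nth_map 0) ?size_iota ?iter_lt // nth_iota ?iter_lt // add0n.
apply: red_trans (red_Lams _ (CAND'_red _)) _.
rewrite (_ : 3 + L = 2 + L.+1) // Lams_add.
apply: red_trans (red_Lams _ (eta_Lams _ _)) _.
exact: red_refl.
Qed.

Transparent NEXT STEP PI0.

Lemma typed_NEXT G : typed G (NEXT L h) (Arr (Aty L) (Aty L)).
Proof.
apply: closed_typed; apply: typed_lam; apply: typed_Lams.
apply: (typed_apps (n := L) (A := TO)).
- by apply: typed_var; rewrite -[X in lookup _ X]addn0 lookup_nseq_ge.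
- by rewrite size_map size_iota.
move=> u /(@In_map_inv _ _ _ _ u) [j [-> _]]; apply: typed_var; rewrite lookup_nseq //; lia.
Qed.

Lemma typed_STEP G : typed G (STEP L h) (Arr (Tty L) (Tty L)).
Proof.
do 2 apply: typed_lam; apply: typed_app; first exact: typed_NEXT.
by apply: typed_app; apply: typed_var.
Qed.

Lemma typed_PI0 G : typed G (PI0 L) (Aty L).
Proof. apply: typed_Lams; apply: typed_var; rewrite lookup_nseq //; lia. Qed.

Opaque NEXT STEP PI0.

Lemma typed_SEL : typed [::] (SEL L r h c) (arrows r.+1 (omega (Tty L)) (omega (Tty L))).
Proof.
apply: typed_Lams; rewrite Lams_add.
set G0 := nseq r.+1 _ ++ [::].
change (omega (Tty L)) with (Arr (Arr (Tty L) (Tty L)) (Arr (Tty L) (Arr (Aty L) (Aty L)))).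
do 3 apply: typed_lam; apply: typed_Lams.
set G := _ :: _.
have HG : forall i, i < r.+1 -> lookup (nseq L TO ++ G) (L + 3 + i) = Some (omega (Tty L)).
  move=> i Hi; rewrite -addnA lookup_nseq_ge; change (lookup G (3 + i)) with (lookup G0 i); by rewrite /G0 lookup_nseq.
rewrite /BODY; apply: (typed_apps (n := L) (A := TO)); last first.
- move=> u /(@In_map_inv _ _ _ _ u) [j [-> _]].
  rewrite /CAND /ARGS /apps foldl_cat -!/(apps _ _).
  apply: (typed_apps (n := L) (A := TO)); last exact: typed_vars.
  + apply: typed_app; last by apply: typed_var; rewrite -[X in lookup _ X]addn0 lookup_nseq_ge.
    apply: typed_app; last by apply: typed_var; rewrite lookup_nseq_ge.
    apply: typed_app; last by apply: typed_var; rewrite lookup_nseq_ge.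
    by apply: typed_var; rewrite HG //; lia.
  + by rewrite size_vars.
- by rewrite size_map size_iota.
apply: typed_app; last exact: typed_PI0.
apply: typed_app; last by do 1 apply: typed_lam; apply: typed_var.
apply: typed_app; last exact: typed_STEP.
by apply: typed_var; rewrite HG.
Qed.

Lemma sel_def : def_at (Tty L) (fun x : 'I_r.+1 -> nat => x (inord (c (iter (x (inord 0)) h 0)).+1)).
Proof.
exists (SEL L r h c); split; first exact: typed_SEL.
by move=> x; apply/red_conv/sel_red.
Qed.

End S.

Lemma f1_def l L : 2 <= l -> 0 < L -> l %| L -> def_at (Tty L) (f1 l).
Proof.
move=> Hl HL Hd.
have := @sel_def L HL (fun j => j.+1 %% L) (fun j _ => ltn_pmod _ HL) l (fun j => j %% l)
  (fun j _ => ltn_pmod _ (ltnW Hl)).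
apply: def_at_ext => x; rewrite /f1.
have -> : forall m, iter m (fun j => j.+1 %% L) 0 = m %% L.
  elim=> [|m IH] /=; first by rewrite mod0n.
  by rewrite IH -addn1 modnDml addn1.
by rewrite modn_dvdm.
Qed.

Lemma f2_def l L : 0 < L -> l.+2 %| L -> def_at (Tty L) (f2 l).
Proof.
move=> HL Hd.
have HlL : l.+2 <= L by apply: dvdn_leq.
have hL : forall j, j < L -> minn j.+1 L.-1 < L by move=> j _; lia.
have cr : forall j, j < L -> (if j <= l then 0 else 1) < 2 by move=> j _; case: ifP.
have := @sel_def L HL (fun j => minn j.+1 L.-1) hL 2 (fun j => if j <= l then 0 else 1) cr.
apply: def_at_ext => x; rewrite /f2.
have -> : forall m, iter m (fun j => minn j.+1 L.-1) 0 = minn m L.-1.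
  elim=> [|m IH] /=; first by rewrite min0n.
  rewrite IH; lia.
case: ifP => H; case: ifP => H' //; lia.
Qed.

Definition Q k (f : ('I_k -> nat) -> nat) :=
  exists N, 0 < N /\ forall L, 0 < L -> N %| L -> def_at (Tty L) f.

Lemma inG_Q k (f : ('I_k -> nat) -> nat) : inG f -> Q f.
Proof.
elim=> {k f}.
- move=> k f Hf; exists 1; split => // L _ _; exact: ext_poly_def.
- move=> l Hl; exists l; split; first by lia.
  by move=> L HL Hd; apply: f1_def.
- move=> l Hl; exists l.+2; split => // L HL Hd; exact: f2_def.
- move=> m k h gs _ [N0 [HN0 Hh]] _ IHg.
  have [Ns HNs] := fin_all_exists (U := fun _ => nat) IHg.
  exists (N0 * \prod_(i < m) Ns i); split.
    by rewrite muln_gt0 HN0 /=; apply: prodn_gt0 => i; case: (HNs i).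
  move=> L HL Hd; apply: comp_def.
    by apply: Hh => //; apply: dvdn_trans Hd; apply: dvdn_mulr.
  move=> i; case: (HNs i) => _ Hi; apply: Hi => //.
  apply: dvdn_trans Hd; apply: dvdn_mull.
  by rewrite (bigD1 i) //=; apply: dvdn_mulr.
Qed.

Theorem corollary1 (k : nat) (f : ('I_k -> nat) -> nat) :
  inG f -> strictly_definable f.
Proof.
move=> /inG_Q [N [HN H]].
have [E [HE1 HE2]] := H N HN (dvdnn N).
by exists (Tty N), E.
Qed.
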